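(* Consider a draft tree generated by Greedy sampling with the acceptance probabilities produced by the UniVer Allocation Phase (defined in the context). Then the tree is locally lossless: for every non-leaf node $v$ and every $t\in\Sigma$, $$\mathbb{E}_{\mathcal{C}(v)}\big[p_v(t)\big]=\tilde p_v\,\mathcal{M}_b(t\mid v),$$ where the expectation is over the randomness of generating the children set $\mathcal{C}(v)$ (i.e. over $u_m\sim\mathcal{M}_s^\neg(\cdot\mid v)$), with $v$ and $\tilde p_v$ fixed.
   Context: Let $\Sigma$ be a finite vocabulary; $\mathcal{M}_b(\cdot\mid x)$ (target) and $\mathcal{M}_s(\cdot\mid x)$ (draft) are conditional distributions on $\Sigma$ for every context $x$. $[x]_+=\max\{x,0\}$. Draft tree: fixed rooted topology (root $r$, representing the current context); each non-root node carries a token and is identified with the token sequence on the path from $r$; $\mathcal{M}_b(\cdot\mid v),\mathcal{M}_s(\cdot\mid v)$ condition on that sequence. Greedy sampling, top-down: a non-leaf $v$ with $m$ children has children $\mathcal{C}(v)=\{u_1,\dots,u_m\}$, where $u_1,\dots,u_{m-1}$ are the $m-1$ most probable tokens under $\mathcal{M}_s(\cdot\mid v)$ (set $H_v$, ties broken by a fixed rule) and $u_m\sim\mathcal{M}_s^\neg(\cdot\mid v)$, with $\mathcal{M}_s^\neg(x\mid v)=\mathcal{M}_s(x\mid v)/\sum_{y\notin H_v}\mathcal{M}_s(y\mid v)$ for $x\notin H_v$ and $0$ for $x\in H_v$. UniVer Allocation Phase: $\tilde p_r=1$; top-down, for each non-leaf $v$ with computed $\tilde p_v\in[0,1]$: $Z_v=1-\tilde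 p_v+\sum_{x\in\Sigma}[\tilde p_v\mathcal{M}_b(x\mid v)-\mathcal{M}_s^\neg(x\mid v)]_+$; $p_v(u_m)=\min\{1,\tilde p_v\mathcal{M}_b(u_m\mid v)/\mathcal{M}_s^\neg(u_m\mid v)\}$; for every $u\in\Sigma\setminus\{u_m\}$, $p_v(u)=[\tilde p_v\mathcal{M}_b(u\mid v)-\mathcal{M}_s^\neg(u\mid v)]_+(1-p_v(u_m))/Z_v$; then $\tilde p_{u_j}=p_v(u_j)/(1-\sum_{i<j}p_v(u_i))$ for $j=1,\dots,m$. *)

(* Defs.v *)
From mathcomp Require Import all_boot all_order all_algebra.
Set Implicit Arguments. Unset Strict Implicit. Unset Printing Implicit Defensive.
Import Order.TTheory GRing.Theory Num.Theory.
Local Open Scope ring_scope.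

Section UniVer.
Variables (R : realFieldType) (S : finType).

Definition pospart (x : R) : R := Num.max x 0.

Definition is_distr (P : S -> R) : Prop :=
  (forall x, 0 <= P x) /\ \sum_(x : S) P x = 1.

Definition top_set (Ms : S -> R) (k : nat) (H : {set S}) : Prop :=
  #|H| = k /\ forall x y, x \in H -> y \notin H -> Ms y <= Ms x.

Definition Msneg (Ms : S -> R) (H : {set S}) (x : S) : R :=
  if x \in H then 0 else Ms x / \sum_(y | y \notin H) Ms y.

Definition Zv (pt : R) (Mb Ms : S -> R) (H : {set S}) : R :=
  1 - pt + \sum_(x : S) pospart (pt * Mb x - Msneg Ms H x).

Definition pv_last (pt : R) (Mb Ms : S -> R) (H : {set S}) (um : S) : R :=
  Num.min 1 (pt * Mb um / Msneg Ms H um).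

(* p_v(u), given the sampled last child u_m *)
Definition pv (pt : R) (Mb Ms : S -> R) (H : {set S}) (um u : S) : R :=
  if u == um then pv_last pt Mb Ms H um
  else pospart (pt * Mb u - Msneg Ms H u) * (1 - pv_last pt Mb Ms H um)
       / Zv pt Mb Ms H.

End UniVer.

(* Main.v *)
Require Import Defs.
From mathcomp Require Import all_boot all_order all_algebra.
From mathcomp Require Import ring lra.
Import Order.TTheory GRing.Theory Num.Theory.
Local Open Scope ring_scope.

Lemma key1 (R : realFieldType) (q a : R) : 0 <= q -> 0 <= a ->
  q * Num.min 1 (a / q) = Num.min q a.
Proof.
move=> q0 a0; have [->|qn0] := eqVneq q 0.
  by rewrite mul0r; apply/esym/min_idPl.
have qp : 0 < q by rewrite lt0r qn0 q0.
have [aq|aq] := lerP q a.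
  rewrite (min_idPl _) ?mulr1 //.
  by rewrite ler_pdivlMr // mul1r.
rewrite (min_idPr _).
  by rewrite mulrC divfK.
by rewrite ler_pdivrMr // mul1r ltW.
Qed.

Lemma key2 (R : realFieldType) (q a : R) : 0 <= q -> 0 <= a ->
  q * (1 - Num.min 1 (a / q)) = pospart (q - a).
Proof.
move=> q0 a0; rewrite mulrBr mulr1 key1 // /pospart.
have [aq|aq] := lerP q a.
  rewrite subrr; apply/esym/max_idPr; lra.
apply/esym/max_idPl; lra.
Qed.

Lemma posE (R : realFieldType) (x : R) : pospart x = x + pospart (- x).
Proof.
rewrite /pospart; have [x0|x0] := lerP 0 x.
  rewrite (max_idPr _) ?addr0 //; lra.
rewrite (max_idPl _) ?subrr //; lra.
Qed.

Theorem theorem3 (R : realFieldType) (S : finType) (Mb Ms : S -> R)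
    (pt : R) (m : nat) (H : {set S}) (t : S) :
  is_distr Mb -> is_distr Ms ->
  0 <= pt <= 1 ->
  (0 < m)%N ->
  top_set Ms m.-1 H ->
  0 < \sum_(y | y \notin H) Ms y ->
  \sum_(um : S) Msneg Ms H um * pv pt Mb Ms H um t = pt * Mb t.
Proof.
move=> [Mb0 Mb1] [Ms0 Ms1] /andP[pt0 pt1] _ _ D0.
set q := Msneg Ms H.
have q0 x : 0 <= q x.
  rewrite /q /Msneg; case: ifP => // _; apply: divr_ge0 => //; exact: ltW.
have a0 x : 0 <= pt * Mb x by apply: mulr_ge0.
have q1 : \sum_x q x = 1.
  rewrite /q /Msneg.
  rewrite (eq_bigr (fun x => (if x \notin H then Ms x else 0) / \sum_(y | y \notin H) Ms y)).
    by rewrite -mulr_suml -big_mkcond /= divff // gt_eqF.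
  by move=> x _; case: (x \in H) => /=; rewrite ?mul0r.
set Z := Zv pt Mb Ms H.
have ZE : Z = \sum_x pospart (q x - pt * Mb x).
  rewrite /Z /Zv -/q; symmetry.
  rewrite (eq_bigr (fun x => (q x - pt * Mb x) + pospart (pt * Mb x - q x))); last first.
    by move=> x _; rewrite posE opprB.
  by rewrite big_split /= sumrB q1 -mulr_sumr Mb1 mulr1.
rewrite (bigD1 t) //= /pv eqxx /pv_last -/q key1 //.
rewrite (eq_bigr (fun um => pospart (pt * Mb t - q t) / Z * pospart (q um - pt * Mb um))); last first.
  move=> um /negbTE umt; rewrite eq_sym umt -/q.
  rewrite mulrC -!mulrA; congr (_ * _); rewrite mulrC -mulrA; congr (_ * _).
  by rewrite mulrA key2.
rewrite -mulr_sumr.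
have [aq|aq] := lerP (pt * Mb t) (q t).
  rewrite /pospart (max_idPr _) ?mul0r ?addr0 //; lra.
have -> : \sum_(i | i != t) pospart (q i - pt * Mb i) = Z.
  rewrite ZE [in RHS](bigD1 t) //=.
  have -> : pospart (q t - pt * Mb t) = 0 by apply/max_idPr; lra.
  by rewrite add0r.
have Zp : 0 < Z.
  rewrite /Z /Zv -/q (bigD1 t) //=.
  have : 0 <= \sum_(i | i != t) pospart (pt * Mb i - q i).
    apply: sumr_ge0 => i _; rewrite /pospart le_max lexx orbT //.
  have -> : pospart (pt * Mb t - q t) = pt * Mb t - q t by apply/max_idPl; lra.
  lra.
have -> : pospart (pt * Mb t - q t) = pt * Mb t - q t by apply/max_idPl; lra.
rewrite divfK ?gt_eqF //; lra.
Qed.
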